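(* Let $f:\mathbb{R}^2\to\mathbb{R}^2$ be a smooth one-generic mapping having a cusp point at the origin with $f(\mathbf{0})=\mathbf{0}$. Let $L(x,y)=(ax-by,bx+ay)$ with $a^2+b^2=1$ and $g=L\circ f$. Then $\mathbf{0}$ is a cusp point of $g$, and if $F$, $G$ are the mappings associated with $f$, $g$ respectively, then $\det DG(\mathbf{0})=\det DF(\mathbf{0})$.
   Context: For a smooth $h:\mathbb{R}^2\to\mathbb{R}^2$ with $J_h=\det Dh$, the associated mapping is $H=Dh\cdot(-\partial J_h/\partial y,\ \partial J_h/\partial x)^T$. $f$ is one-generic if $dJ\ne0$ on $J^{-1}(0)$ where $J=\det Df$ (equivalently, $j^1f$ is transverse to the corank strata). A point $p\in S_1(f)=J^{-1}(0)$ with $T_pS_1(f)=\ker Df(p)$ is a cusp point if it is a simple zero of $dJ(\xi)$ on $S_1(f)$, $\xi$ a nonvanishing vector field along $S_1(f)$ in $\ker Df$. *)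

(* Defs.v *)
From Stdlib Require Import Reals List.
From Coquelicot Require Import Coquelicot.
Open Scope R_scope.

Definition px (h : R * R -> R) (p : R * R) : R :=
  Derive (fun t => h (t, snd p)) (fst p).
Definition py (h : R * R -> R) (p : R * R) : R :=
  Derive (fun t => h (fst p, t)) (snd p).

(** Iterated partial derivative along a word of directions
    (true = d/dx, false = d/dy), applied right-to-left. *)
Fixpoint pd (l : list bool) (h : R * R -> R) : R * R -> R :=
  match l with
  | nil => h
  | true :: l' => px (pd l' h)
  | false :: l' => py (pd l' h)
  end.

Definition smooth2 (h : R * R -> R) : Prop :=
  forall (l : list bool) (p : R * R),
    ex_derive (fun t => pd l h (t, snd p)) (fst p) /\
    ex_derive (fun t => pd l h (fst p, t)) (snd p) /\
    continuous (pd l h) p.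

Definition comp1 (f : R * R -> R * R) : R * R -> R := fun p => fst (f p).
Definition comp2 (f : R * R -> R * R) : R * R -> R := fun p => snd (f p).

Definition smooth_map (f : R * R -> R * R) : Prop :=
  smooth2 (comp1 f) /\ smooth2 (comp2 f).

Definition smooth1 (u : R -> R) : Prop := forall (n : nat) (t : R), ex_derive_n u n t.

Definition jac (f : R * R -> R * R) (p : R * R) : R :=
  px (comp1 f) p * py (comp2 f) p - py (comp1 f) p * px (comp2 f) p.

Definition Dmap (f : R * R -> R * R) (p v : R * R) : R * R :=
  (px (comp1 f) p * fst v + py (comp1 f) p * snd v,
   px (comp2 f) p * fst v + py (comp2 f) p * snd v).

Definition dJ (f : R * R -> R * R) (p v : R * R) : R :=
  px (jac f) p * fst v + py (jac f) p * snd v.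

Definition one_generic (f : R * R -> R * R) : Prop :=
  forall p, jac f p = 0 -> (px (jac f) p, py (jac f) p) <> (0, 0).

(** Cusp point: p in S_1(f) = J^{-1}(0); S_1(f) is locally parametrized near p
    by a smooth regular curve gamma with gamma(0) = p; T_p S_1(f) (the line
    spanned by gamma'(0)) equals ker Df(p); xi is a smooth nonvanishing vector
    field along S_1(f) (along gamma) with values in ker Df; and t |-> dJ(xi)
    along S_1(f) has a simple zero at t = 0. *)
Definition cusp_point (f : R * R -> R * R) (p : R * R) : Prop :=
  jac f p = 0 /\
  exists (eps : R) (g1 g2 xi1 xi2 : R -> R),
    0 < eps /\
    smooth1 g1 /\ smooth1 g2 /\ smooth1 xi1 /\ smooth1 xi2 /\
    (g1 0, g2 0) = p /\
    (forall t, -eps < t < eps ->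
        jac f (g1 t, g2 t) = 0 /\
        (Derive g1 t, Derive g2 t) <> (0, 0) /\
        (xi1 t, xi2 t) <> (0, 0) /\
        Dmap f (g1 t, g2 t) (xi1 t, xi2 t) = (0, 0)) /\
    (forall v : R * R,
        Dmap f p v = (0, 0) <->
        exists c : R, v = (c * Derive g1 0, c * Derive g2 0)) /\
    (let phi := fun t => dJ f (g1 t, g2 t) (xi1 t, xi2 t) in
     phi 0 = 0 /\ Derive phi 0 <> 0).

Definition assoc_map (h : R * R -> R * R) (p : R * R) : R * R :=
  Dmap h p (- py (jac h) p, px (jac h) p).

Definition detD (H : R * R -> R * R) (p : R * R) : R := jac H p.

Definition rotL (a b : R) (f : R * R -> R * R) : R * R -> R * R :=
  fun p => (a * fst (f p) - b * snd (f p), b * fst (f p) + a * snd (f p)).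

(* Main.v *)
Require Import Defs.
From Stdlib Require Import Reals Lra Psatz FunctionalExtensionality List.
Import ListNotations.
From Coquelicot Require Import Coquelicot.
Open Scope R_scope.

Definition DA (h : R * R -> R) : Prop := forall p,
  ex_derive (fun t => h (t, snd p)) (fst p) /\ ex_derive (fun t => h (fst p, t)) (snd p).

Lemma DA_plus u v : DA u -> DA v -> DA (fun q => u q + v q).
Proof. intros Hu Hv p; destruct (Hu p), (Hv p); split;
  [exact (ex_derive_plus (K:=R_AbsRing) (V:=R_NormedModule) _ _ _ H H1)
  |exact (ex_derive_plus (K:=R_AbsRing) (V:=R_NormedModule) _ _ _ H0 H2)]. Qed.
Lemma DA_minus u v : DA u -> DA v -> DA (fun q => u q - v q).
Proof. intros Hu Hv p; destruct (Hu p), (Hv p); split;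
  [exact (ex_derive_minus (K:=R_AbsRing) (V:=R_NormedModule) _ _ _ H H1)
  |exact (ex_derive_minus (K:=R_AbsRing) (V:=R_NormedModule) _ _ _ H0 H2)]. Qed.
Lemma DA_opp u : DA u -> DA (fun q => - u q).
Proof. intros Hu p; destruct (Hu p); split;
  [exact (ex_derive_opp (K:=R_AbsRing) (V:=R_NormedModule) _ _ H)
  |exact (ex_derive_opp (K:=R_AbsRing) (V:=R_NormedModule) _ _ H0)]. Qed.
Lemma DA_mult u v : DA u -> DA v -> DA (fun q => u q * v q).
Proof. intros Hu Hv p; destruct (Hu p), (Hv p); split;
  [exact (ex_derive_mult _ _ _ H H1) | exact (ex_derive_mult _ _ _ H0 H2)]. Qed.

Lemma px_plus u v : DA u -> DA v -> px (fun q => u q + v q) = fun q => px u q + px v q.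
Proof. intros Hu Hv; extensionality q; unfold px;
  exact (Derive_plus _ _ _ (proj1 (Hu q)) (proj1 (Hv q))). Qed.
Lemma py_plus u v : DA u -> DA v -> py (fun q => u q + v q) = fun q => py u q + py v q.
Proof. intros Hu Hv; extensionality q; unfold py;
  exact (Derive_plus _ _ _ (proj2 (Hu q)) (proj2 (Hv q))). Qed.
Lemma px_minus u v : DA u -> DA v -> px (fun q => u q - v q) = fun q => px u q - px v q.
Proof. intros Hu Hv; extensionality q; unfold px;
  exact (Derive_minus _ _ _ (proj1 (Hu q)) (proj1 (Hv q))). Qed.
Lemma py_minus u v : DA u -> DA v -> py (fun q => u q - v q) = fun q => py u q - py v q.
Proof. intros Hu Hv; extensionality q; unfold py;
  exact (Derive_minus _ _ _ (proj2 (Hu q)) (proj2 (Hv q))). Qed.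
Lemma px_mult u v : DA u -> DA v -> px (fun q => u q * v q) = fun q => px u q * v q + u q * px v q.
Proof. intros Hu Hv; extensionality q; destruct q as [x y]; unfold px;
  exact (Derive_mult _ _ _ (proj1 (Hu (x,y))) (proj1 (Hv (x,y)))). Qed.
Lemma py_mult u v : DA u -> DA v -> py (fun q => u q * v q) = fun q => py u q * v q + u q * py v q.
Proof. intros Hu Hv; extensionality q; destruct q as [x y]; unfold py;
  exact (Derive_mult _ _ _ (proj2 (Hu (x,y))) (proj2 (Hv (x,y)))). Qed.
Lemma px_scal k u : px (fun q => k * u q) = fun q => k * px u q.
Proof. extensionality q; unfold px; exact (Derive_scal _ _ _). Qed.
Lemma py_scal k u : py (fun q => k * u q) = fun q => k * py u q.
Proof. extensionality q; unfold py; exact (Derive_scal _ _ _). Qed.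
Lemma DA_scal k u : DA u -> DA (fun q => k * u q).
Proof. intros Hu p; destruct (Hu p); split;
  [exact (ex_derive_scal _ _ _ H) | exact (ex_derive_scal _ _ _ H0)]. Qed.

Lemma smooth_DA h l : smooth2 h -> DA (pd l h).
Proof. intros H p; destruct (H l p) as [A [B _]]; split; assumption. Qed.

Lemma jac_rot a b F : a ^ 2 + b ^ 2 = 1 -> DA (comp1 F) -> DA (comp2 F) ->
  jac (rotL a b F) = jac F.
Proof.
  intros Hab H1 H2.
  assert (E1 : comp1 (rotL a b F) = fun q => a * comp1 F q - b * comp2 F q) by reflexivity.
  assert (E2 : comp2 (rotL a b F) = fun q => b * comp1 F q + a * comp2 F q) by reflexivity.
  unfold jac; rewrite E1, E2.
  rewrite px_minus, py_minus, px_plus, py_plus by (apply DA_scal; assumption).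
  rewrite !px_scal, !py_scal. extensionality q.
  transitivity ((a^2+b^2) * (px (comp1 F) q * py (comp2 F) q - py (comp1 F) q * px (comp2 F) q)).
  ring. rewrite Hab; ring.
Qed.

Lemma Dmap_rot a b F p v : DA (comp1 F) -> DA (comp2 F) ->
  Dmap (rotL a b F) p v =
  (a * fst (Dmap F p v) - b * snd (Dmap F p v), b * fst (Dmap F p v) + a * snd (Dmap F p v)).
Proof.
  intros H1 H2.
  assert (E1 : comp1 (rotL a b F) = fun q => a * comp1 F q - b * comp2 F q) by reflexivity.
  assert (E2 : comp2 (rotL a b F) = fun q => b * comp1 F q + a * comp2 F q) by reflexivity.
  unfold Dmap; rewrite E1, E2.
  rewrite px_minus, py_minus, px_plus, py_plus by (apply DA_scal; assumption).
  rewrite !px_scal, !py_scal. simpl. f_equal; ring.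
Qed.

Lemma rot_zero a b X Y : a ^ 2 + b ^ 2 = 1 ->
  ((a * X - b * Y, b * X + a * Y) = (0, 0) <-> (X, Y) = (0, 0)).
Proof.
  intros Hab; split; intros H.
  - injection H; intros E2 E1.
    assert (X = a * (a * X - b * Y) + b * (b * X + a * Y)).
    { transitivity ((a^2+b^2)*X). rewrite Hab; ring. ring. }
    assert (Y = a * (b * X + a * Y) - b * (a * X - b * Y)).
    { transitivity ((a^2+b^2)*Y). rewrite Hab; ring. ring. }
    rewrite E1, E2 in *. f_equal; lra.
  - injection H; intros -> ->. f_equal; ring.
Qed.

Theorem mainTheorem11 (f : R * R -> R * R) (a b : R) :
  smooth_map f ->
  one_generic f ->
  cusp_point f (0, 0) ->
  f (0, 0) = (0, 0) ->
  a ^ 2 + b ^ 2 = 1 ->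
  cusp_point (rotL a b f) (0, 0) /\
  detD (assoc_map (rotL a b f)) (0, 0) = detD (assoc_map f) (0, 0).
Proof.
  intros [S1 S2] _ Hc _ Hab.
  pose proof (fun l => smooth_DA _ l S1) as D1.
  pose proof (fun l => smooth_DA _ l S2) as D2.
  assert (HJ : jac (rotL a b f) = jac f) by (apply jac_rot; [exact Hab | exact (D1 nil) | exact (D2 nil)]).
  assert (HdJ : dJ (rotL a b f) = dJ f) by (unfold dJ; rewrite HJ; reflexivity).
  assert (HD : forall p v, Dmap (rotL a b f) p v = (0,0) <-> Dmap f p v = (0,0)).
  { intros p v. rewrite Dmap_rot by (exact (D1 nil) || exact (D2 nil)).
    rewrite rot_zero by exact Hab. destruct (Dmap f p v); simpl; tauto. }
  split.
  - destruct Hc as [H0 [eps [g1 [g2 [xi1 [xi2 [He [s1 [s2 [s3 [s4 [Hp [Ht [Hk Hphi]]]]]]]]]]]]]].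
    split; [rewrite HJ; exact H0|].
    exists eps, g1, g2, xi1, xi2.
    do 6 (split; [assumption|]).
    split; [|split].
    + intros t Ht'. destruct (Ht t Ht') as [A [B [C E]]].
      rewrite HJ, HD. tauto.
    + intros v. rewrite HD. apply Hk.
    + rewrite HdJ. exact Hphi.
  - set (J := jac f).
    assert (DJ : DA J).
    { unfold J, jac. apply DA_minus; apply DA_mult;
        first [exact (D1 (true::nil)) | exact (D1 (false::nil)) | exact (D2 (true::nil)) | exact (D2 (false::nil))]. }
    assert (EpxJ : px J = fun q => pd (true::true::nil) (comp1 f) q * pd (false::nil) (comp2 f) q
        + pd (true::nil) (comp1 f) q * pd (true::false::nil) (comp2 f) q
        - (pd (true::false::nil) (comp1 f) q * pd (true::nil) (comp2 f) q
        + pd (false::nil) (comp1 f) q * pd (true::true::nil) (comp2 f) q)).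
    { unfold J, jac. rewrite px_minus by (apply DA_mult; first [exact (D1 (true::nil)) | exact (D1 (false::nil)) | exact (D2 (true::nil)) | exact (D2 (false::nil))]).
      rewrite !px_mult by first [exact (D1 (true::nil)) | exact (D1 (false::nil)) | exact (D2 (true::nil)) | exact (D2 (false::nil))].
      reflexivity. }
    assert (EpyJ : py J = fun q => pd (false::true::nil) (comp1 f) q * pd (false::nil) (comp2 f) q
        + pd (true::nil) (comp1 f) q * pd (false::false::nil) (comp2 f) q
        - (pd (false::false::nil) (comp1 f) q * pd (true::nil) (comp2 f) q
        + pd (false::nil) (comp1 f) q * pd (false::true::nil) (comp2 f) q)).
    { unfold J, jac. rewrite py_minus by (apply DA_mult; first [exact (D1 (true::nil)) | exact (D1 (false::nil)) | exact (D2 (true::nil)) | exact (D2 (false::nil))]).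
      rewrite !py_mult by first [exact (D1 (true::nil)) | exact (D1 (false::nil)) | exact (D2 (true::nil)) | exact (D2 (false::nil))].
      reflexivity. }
    assert (DpxJ : DA (px J)) by (rewrite EpxJ; apply DA_minus; apply DA_plus; apply DA_mult; first [exact (D1 _) | exact (D2 _)]).
    assert (DpyJ : DA (py J)) by (rewrite EpyJ; apply DA_minus; apply DA_plus; apply DA_mult; first [exact (D1 _) | exact (D2 _)]).
    assert (EA : assoc_map (rotL a b f) = rotL a b (assoc_map f)).
    { extensionality q. unfold assoc_map. rewrite HJ.
      rewrite Dmap_rot by (exact (D1 nil) || exact (D2 nil)). reflexivity. }
    unfold detD. rewrite EA. rewrite jac_rot; [reflexivity|exact Hab| |].
    + change (DA (fun q => px (comp1 f) q * (- py J q) + py (comp1 f) q * px J q)).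
      apply DA_plus; apply DA_mult; [exact (D1 (true::nil)) | apply DA_opp; exact DpyJ | exact (D1 (false::nil)) | exact DpxJ].
    + change (DA (fun q => px (comp2 f) q * (- py J q) + py (comp2 f) q * px J q)).
      apply DA_plus; apply DA_mult; [exact (D2 (true::nil)) | apply DA_opp; exact DpyJ | exact (D2 (false::nil)) | exact DpxJ].
Qed.
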